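(* Let $k\ge 2$. If $G$ is a finite simple graph admitting a closed neighborhood balanced $k$-coloring and $H$ is a finite simple graph admitting a neighborhood-balanced $k$-coloring, then the Cartesian product $G\,\square\,H$ admits a closed neighborhood balanced $k$-coloring.
   Context: For a vertex $v$, $N(v)=\{u: uv\in E\}$ and $N[v]=N(v)\cup\{v\}$. A neighborhood-balanced $k$-coloring of a graph is a map $c:V\to\{1,\dots,k\}$ such that for every vertex $v$ the numbers $|\{u\in N(v): c(u)=i\}|$, $i=1,\dots,k$, are all equal; a closed neighborhood balanced $k$-coloring is defined likewise with $N[v]$ in place of $N(v)$. The Cartesian product $G\,\square\,H$ has vertex set $V(G)\times V(H)$, with $(g,h)$ adjacent to $(g',h')$ iff ($g=g'$ and $hh'\in E(H)$) or ($h=h'$ and $gg'\in E(G)$). *)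

(* Defs.v *)
From mathcomp Require Import all_boot.
Set Implicit Arguments. Unset Strict Implicit. Unset Printing Implicit Defensive.

Definition simple_graph (T : finType) (e : rel T) : Prop :=
  symmetric e /\ irreflexive e.

Definition nbhd (T : finType) (e : rel T) (v : T) : {set T} := [set u | e v u].
Definition cnbhd (T : finType) (e : rel T) (v : T) : {set T} := v |: nbhd e v.

(* neighborhood-balanced k-coloring: c : T -> 'I_k (colors 1..k as 0..k-1),
   every color appears equally often in every N(v). *)
Definition nb_coloring (k : nat) (T : finType) (e : rel T) (c : T -> 'I_k) : Prop :=
  forall (v : T) (i j : 'I_k),
    #|[set u in nbhd e v | c u == i]| = #|[set u in nbhd e v | c u == j]|.

Definition cnb_coloring (k : nat) (T : finType) (e : rel T) (c : T -> 'I_k) : Prop :=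
  forall (v : T) (i j : 'I_k),
    #|[set u in cnbhd e v | c u == i]| = #|[set u in cnbhd e v | c u == j]|.

Definition cart_prod (T1 T2 : finType) (e1 : rel T1) (e2 : rel T2) : rel (T1 * T2) :=
  fun x y => ((x.1 == y.1) && e2 x.2 y.2) || ((x.2 == y.2) && e1 x.1 y.1).

(* Main.v *)
Require Import Defs.
From mathcomp Require Import all_boot ssralg zmodp.
Import GRing.Theory.

Lemma mem_img1 (T1 T2 : finType) (h : T2) (A : {set T1}) x y :
  ((x, y) \in [set (g, h) | g in A]) = (y == h) && (x \in A).
Proof.
apply/imsetP/andP => [[g gA [-> ->]]|[/eqP -> xA]]; first by [].
by exists x.
Qed.

Lemma mem_img2 (T1 T2 : finType) (g : T1) (B : {set T2}) x y :
  ((x, y) \in [set (g, h) | h in B]) = (x == g) && (y \in B).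
Proof.
apply/imsetP/andP => [[h hB [-> ->]]|[/eqP -> yB]]; first by [].
by exists y.
Qed.

Theorem theorem2p25 (k : nat) (T1 T2 : finType) (e1 : rel T1) (e2 : rel T2) :
  2 <= k ->
  simple_graph e1 -> simple_graph e2 ->
  (exists c1 : T1 -> 'I_k, cnb_coloring e1 c1) ->
  (exists c2 : T2 -> 'I_k, nb_coloring e2 c2) ->
  exists c : T1 * T2 -> 'I_k, cnb_coloring (cart_prod e1 e2) c.
Proof.
case: k => [//|n] _ [s1 i1] [s2 i2] [c1 H1] [c2 H2].
exists (fun u => (c1 u.1 + c2 u.2)%R) => -[g h].
suff key : forall i : 'I_n.+1,
  #|[set u in cnbhd (cart_prod e1 e2) (g, h) | (c1 u.1 + c2 u.2)%R == i]| =
  #|[set x in cnbhd e1 g | c1 x == 0%R]| + #|[set y in nbhd e2 h | c2 y == 0%R]|.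
  by move=> i j; rewrite !key.
move=> i.
pose A := [set x in cnbhd e1 g | c1 x == (i - c2 h)%R].
pose B := [set y in nbhd e2 h | c2 y == (i - c1 g)%R].
have -> : [set u in cnbhd (cart_prod e1 e2) (g, h) | (c1 u.1 + c2 u.2)%R == i]
   = [set (x, h) | x in A] :|: [set (g, y) | y in B].
  apply/setP => -[x y]; rewrite !inE mem_img1 mem_img2 !inE /cart_prod /=.
  have E1 : forall a b c : 'I_n.+1, (a + b == c)%R = (a == c - b)%R.
    by move=> a b c; apply/eqP/eqP => [<-|->]; rewrite ?addrK ?subrK.
  have E2 : forall a b c : 'I_n.+1, (a + b == c)%R = (b == c - a)%R.
    by move=> a b c; rewrite addrC E1.
  have [->|nxg] /= := eqVneq x g; have [->|nyh] /= := eqVneq y h => /=.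
  - by rewrite eqxx /= (i2 h) orbF E1.
  - by rewrite xpair_eqE eqxx (negbTE nyh) /= orbF E2.
  - by rewrite xpair_eqE (negbTE nxg) /= orbF E1.
  - by rewrite xpair_eqE (negbTE nxg).
rewrite cardsU.
have -> : [set (x, h) | x in A] :&: [set (g, y) | y in B] = set0.
  apply/setP => -[x y]; rewrite !inE mem_img1 mem_img2 !inE.
  by case: eqP => //= ->; rewrite (i2 h) !andbF.
rewrite cards0 subn0 !card_imset; last by move=> a b [].
  + by congr addn; [apply: H1 | apply: H2].
by move=> a b [].
Qed.
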